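(* Let $\beta=(\pi_\ell)_{\ell=1}^L$ be a chainable architecture with $L\ge 2$. Then $$\mathcal{B}^\beta=\bigcap_{\ell=1}^{L-1}\mathcal{B}^{\beta_\ell}=\Sigma^{\pi_1*\cdots*\pi_L}\cap\bigcap_{\ell=1}^{L-1}\mathcal{M}^{\beta_\ell}.$$
   Context: A pattern is a tuple $\pi=(a,b,c,d)$ of positive integers; $\mathbf{S}_\pi:=\mathbf{I}_a\otimes\mathbf{1}_{b\times c}\otimes\mathbf{I}_d\in\{0,1\}^{abd\times acd}$. A $\pi$-factor is a complex $abd\times acd$ matrix with support contained in that of $\mathbf{S}_\pi$; $\Sigma^\pi$ is the set of $\pi$-factors. Patterns $\pi_1=(a_1,b_1,c_1,d_1),\pi_2=(a_2,b_2,c_2,d_2)$ are chainable if $a_1c_1/a_2=b_2d_2/d_1=:r(\pi_1,\pi_2)$ is an integer, $a_1\mid a_2$, $d_2\mid d_1$; then $\pi_1*\pi_2:=(a_1,b_1d_1/d_2,a_2c_2/a_1,d_2)$. An architecture $\beta=(\pi_\ell)_{\ell=1}^L$ is a sequence of patterns with $a_\ell c_\ell d_\ell=a_{\ell+1}b_{\ell+1}d_{\ell+1}$; it is chainable if all consecutive pairs are chainable. For chainable $\beta$, $\pi_p*\cdots*\pi_q$ denotes the iterated product (well defined). $\mathcal{B}^\beta:=\{\mathbf{X}_1\cdots\mathbf{X}_L:\mathbf{X}_\ell\in\Sigma^{\pi_\ell}\}$. For $\ell\in\{1,\dots,L-1\}$, $\beta_\ell:=(\pi_1*\cdots*\pi_\ell,\;\pi_{\ell+1}*\cdots*\pi_L)$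 (a two-pattern architecture). For binary $\mathbf{L}\in\{0,1\}^{m\times r},\mathbf{R}\in\{0,1\}^{r\times n}$ let $\mathbf{U}_i:=\mathbf{L}[:,i]\mathbf{R}[i,:]$, let $\mathcal{P}(\mathbf{L},\mathbf{R})$ be the partition of $\{1,\dots,r\}$ into classes of $i\sim j\iff\mathbf{U}_i=\mathbf{U}_j$, and for a class $P$ let $R_P\times C_P$ be the support of $\mathbf{U}_i$, $i\in P$. For a chainable pair $\alpha=(\pi,\pi')$, $\mathcal{M}^\alpha$ is the set of complex matrices $\mathbf{A}$ of the size of matrices in $\mathcal{B}^\alpha$ such that $\operatorname{rank}(\mathbf{A}[R_P,C_P])\le r(\pi,\pi')$ for every $P\in\mathcal{P}(\mathbf{S}_\pi,\mathbf{S}_{\pi'})$. *)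

(* Defs.v *)
From mathcomp Require Import all_boot all_algebra.
From mathcomp Require Import complex.
From mathcomp Require Import Rstruct.

Set Implicit Arguments.
Unset Strict Implicit.
Unset Printing Implicit Defensive.

Import GRing.Theory.
Local Open Scope ring_scope.

Definition CC := complex Rdefinitions.R.

Record pattern := Pattern { pa : nat; pb : nat; pc : nat; pd : nat }.

Definition pattern_pos (p : pattern) : bool :=
  [&& 0 < pa p, 0 < pb p, 0 < pc p & 0 < pd p]%N.

Definition prows (p : pattern) : nat := (pa p * pb p * pd p)%N.
Definition pcols (p : pattern) : nat := (pa p * pc p * pd p)%N.

(* Entry (i,j) (0-based, Kronecker order) of S_pi = I_a (x) 1_{bxc} (x) I_d:
   with i = i1*(b d) + i2*d + i3 and j = j1*(c d) + j2*d + j3 it is 1 iff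
   i1 = j1 and i3 = j3. *)
Definition Sentry (p : pattern) (i j : nat) : bool :=
  (i %/ (pb p * pd p) == j %/ (pc p * pd p))%N && (i %% pd p == j %% pd p)%N.

(* The binary matrix S_pi (used with m = prows p, n = pcols p, or, for the
   right factor of a chainable pair, with m = pcols of the left pattern,
   which equals prows of the right one). *)
Definition Smat (p : pattern) (m n : nat) : 'M[bool]_(m, n) :=
  \matrix_(i < m, j < n) Sentry p i j.

Definition inSigma (p : pattern) (m n : nat) (A : 'M[CC]_(m, n)) : Prop :=
  [/\ m = prows p, n = pcols p &
      forall (i : 'I_m) (j : 'I_n), ~~ Smat p m n i j -> A i j = 0].

Definition chainable (p q : pattern) : Prop :=
  [/\ (pa q %| pa p * pc p)%N, (pd p %| pb q * pd q)%N,
      (pa p * pc p %/ pa q = pb q * pd q %/ pd p)%N,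
      (pa p %| pa q)%N & (pd q %| pd p)%N].

Definition rpair (p q : pattern) : nat := (pa p * pc p %/ pa q)%N.

Definition pstar (p q : pattern) : pattern :=
  Pattern (pa p) (pb p * pd p %/ pd q)%N (pa q * pc q %/ pa p)%N (pd q).

Definition dummy_pattern := Pattern 1 1 1 1.

Definition architecture (beta : seq pattern) : Prop :=
  [/\ size beta != 0%N, all pattern_pos beta &
      forall l, (l.+1 < size beta)%N ->
        pcols (nth dummy_pattern beta l) = prows (nth dummy_pattern beta l.+1)].

Definition chainable_arch (beta : seq pattern) : Prop :=
  architecture beta /\
  forall l, (l.+1 < size beta)%N ->
    chainable (nth dummy_pattern beta l) (nth dummy_pattern beta l.+1).

Definition pstar_seq (s : seq pattern) : pattern :=
  match s with
  | [::] => dummy_pattern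
  | p :: s' => foldl pstar p s'
  end.

Definition beta_l (beta : seq pattern) (l : nat) : seq pattern :=
  [:: pstar_seq (take l beta); pstar_seq (drop l beta)].

Fixpoint inB (beta : seq pattern) (m n : nat) (A : 'M[CC]_(m, n)) {struct beta}
  : Prop :=
  match beta with
  | [::] => False
  | p :: beta' =>
    match beta' with
    | [::] => inSigma p A
    | _ :: _ =>
      exists k (X : 'M[CC]_(m, k)) (Y : 'M[CC]_(k, n)),
        [/\ inSigma p X, inB beta' Y & A = X *m Y]
    end
  end.

Definition Umat m r n (L : 'M[bool]_(m, r)) (R : 'M[bool]_(r, n)) (i : 'I_r)
  : 'M[bool]_(m, n) := \matrix_(x, y) (L x i && R i y).

Definition Upartition m r n (L : 'M[bool]_(m, r)) (R : 'M[bool]_(r, n))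
  : {set {set 'I_r}} :=
  equivalence_partition (fun i j => Umat L R i == Umat L R j) [set: 'I_r].

Definition Urows m r n (L : 'M[bool]_(m, r)) (R : 'M[bool]_(r, n)) (i : 'I_r)
  : {set 'I_m} := [set x | L x i].
Definition Ucols m r n (L : 'M[bool]_(m, r)) (R : 'M[bool]_(r, n)) (i : 'I_r)
  : {set 'I_n} := [set y | R i y].

Definition submx_set (F : fieldType) m n (A : 'M[F]_(m, n))
  (Rs : {set 'I_m}) (Cs : {set 'I_n}) : 'M[F]_(#|Rs|, #|Cs|) :=
  \matrix_(x < #|Rs|, y < #|Cs|) A (enum_val x) (enum_val y).

Definition inM (p q : pattern) (m n : nat) (A : 'M[CC]_(m, n)) : Prop :=
  [/\ m = prows p, n = pcols q, pcols p = prows q &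
      forall P, P \in Upartition (Smat p m (pcols p)) (Smat q (pcols p) n) ->
      forall i, i \in P ->
        (\rank (submx_set A
                  (Urows (Smat p m (pcols p)) (Smat q (pcols p) n) i)
                  (Ucols (Smat p m (pcols p)) (Smat q (pcols p) n) i))
         <= rpair p q)%N].

(* Main.v *)
Require Import Defs.
From mathcomp Require Import all_boot all_algebra.
From mathcomp Require Import complex.
From mathcomp Require Import Rstruct.
From mathcomp Require Import zify.

Set Implicit Arguments.
Unset Strict Implicit.
Unset Printing Implicit Defensive.


Lemma chain_param p q : pattern_pos p -> pattern_pos q -> chainable p q ->
  exists s t r, [/\ pa q = pa p * s, pd p = t * pd q, pc p = s * r,
                    pb q = r * t & rpair p q = r]%N.
Proof.
case: p => a b c d; case: q => a' b' c' d'.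
rewrite /pattern_pos /chainable /rpair /=.
move=> /and4P [a0 b0 c0 d0] /and4P [a0' b0' c0' d0'] [h1 h2 h3 h4 h5].
case/dvdnP: h4 => s Hs. case/dvdnP: h5 => t Ht.
set r := (a * c %/ a')%N in h3 *.
have E1 : (a * c = r * a')%N by rewrite /r divnK.
have E2 : (b' * d' = r * d)%N by rewrite h3 divnK.
exists s, t, r; split => //; subst; try nia.
Qed.


Section Arith.
Variables (a b c' d' s t r : nat).
Hypotheses (a0 : 0 < a) (b0 : 0 < b) (c0 : 0 < c') (d0 : 0 < d') (s0 : 0 < s)
  (t0 : 0 < t) (r0 : 0 < r).
Let e := t * d'.
Let D := r * e.
Let B := b * e.
Let C := c' * d'.
Definition Sp x i := (x %/ B == i %/ D %/ s) && (x %% e == i %% e).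
Definition Sq i y := (i %/ D == y %/ C) && (i %% d' == y %% d').
Definition Spq x y := (x %/ B == y %/ C %/ s) && (x %% d' == y %% d').

Lemma e0 : 0 < e. Proof. rewrite /e; lia. Qed.
Lemma D0 : 0 < D. Proof. rewrite /D /e; lia. Qed.
Lemma de : d' %| e. Proof. by rewrite /e dvdn_mull. Qed.
Lemma eD : e %| D. Proof. by rewrite /D dvdn_mull. Qed.

Lemma modd' n : n %% e %% d' = n %% d'.
Proof. by rewrite modn_dvdm // de. Qed.
Lemma mode n : n %% D %% e = n %% e.
Proof. by rewrite modn_dvdm // eD. Qed.

Lemma L1f x i y : Sp x i -> Sq i y -> Spq x y.
Proof.
rewrite /Sp /Sq /Spq => /andP [/eqP h1 /eqP h2] /andP [/eqP h3 /eqP h4].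
by rewrite h1 h3 eqxx -modd' h2 modd' h4 eqxx.
Qed.

Definition hn i0 w := i0 %/ D * D + (w * e + i0 %% e).

Lemma hn_small i0 w : w < r -> w * e + i0 %% e < D.
Proof.
move=> wr; have := ltn_pmod i0 e0; rewrite /D => h.
have : (w.+1 * e <= r * e) by rewrite leq_mul2r wr orbT.
rewrite mulSn; lia.
Qed.

Lemma hn_div i0 w : w < r -> hn i0 w %/ D = i0 %/ D.
Proof.
move=> wr; by rewrite /hn divnMDl ?D0 // (divn_small (hn_small _ wr)) addn0.
Qed.

Lemma hn_modD i0 w : w < r -> hn i0 w %% D = w * e + i0 %% e.
Proof.
move=> wr; rewrite /hn modnMDl modn_small //; exact: hn_small.
Qed.

Lemma hn_mode i0 w : w < r -> hn i0 w %% e = i0 %% e.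
Proof.
by move=> wr; rewrite -mode hn_modD // modnMDl modn_mod.
Qed.

Definition gn i := i %% D %/ e.

Lemma gn_hn i0 w : w < r -> gn (hn i0 w) = w.
Proof.
move=> wr; rewrite /gn hn_modD // divnMDl ?e0 // divn_small ?addn0 //.
exact: ltn_pmod e0.
Qed.

Lemma gn_lt i : gn i < r.
Proof.
rewrite /gn ltn_divLR ?e0 //; have := ltn_pmod i D0; by rewrite /D.
Qed.

Lemma hn_lt i0 w : i0 < a * s * D -> w < r -> hn i0 w < a * s * D.
Proof.
move=> hi wr.
have h1 : i0 %/ D < a * s by rewrite ltn_divLR ?D0.
have h2 := hn_small i0 wr.
rewrite /hn.
have : (i0 %/ D).+1 * D <= a * s * D by rewrite leq_mul2r h1 orbT.
move=> h; apply: leq_trans h; by rewrite mulSn [D + _]addnC ltn_add2l.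
Qed.

Lemma Sp_hn i0 w x : w < r -> Sp x (hn i0 w) = Sp x i0.
Proof. by move=> wr; rewrite /Sp hn_div // hn_mode. Qed.

Lemma Sq_hn i0 w y : w < r -> Sq (hn i0 w) y = Sq i0 y.
Proof.
move=> wr; rewrite /Sq hn_div // -modd' hn_mode // modd' //.
Qed.

Lemma hn_gn i0 x y i : Sp x i0 -> Sq i0 y -> Sp x i -> Sq i y -> i = hn i0 (gn i).
Proof.
rewrite /Sp /Sq => /andP [_ /eqP h2] /andP [/eqP h3 _] /andP [_ /eqP h2'] /andP [/eqP h3' _].
have hd : i %/ D = i0 %/ D by rewrite h3 h3'.
have hm : i %% e = i0 %% e by rewrite -h2 h2'.
rewrite /hn /gn -hd -hm.
rewrite {1}(divn_eq i D); congr (_ + _).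
by rewrite {1}(divn_eq (i %% D) e) mode.
Qed.

Lemma L1b x y : x < a * B -> y < a * s * C -> Spq x y ->
  let i := y %/ C * D + x %% e in [/\ i < a * s * D, Sp x i & Sq i y].
Proof.
move=> hx hy /andP [/eqP h1 /eqP h2] i.
have hxe : x %% e < e by apply: ltn_pmod e0.
have heD : e <= D by rewrite /D leq_pmull.
have hi : i %/ D = y %/ C by rewrite /i divnMDl ?D0 // (divn_small (leq_trans hxe heD)) addn0.
have hie : i %% e = x %% e.
  by rewrite /i -modnDml /D mulnA modnMl add0n modn_mod.
split.
- have C0 : 0 < C by rewrite /C muln_gt0 c0 d0.
  have h3 : y %/ C < a * s by rewrite ltn_divLR.
  have : (y %/ C).+1 * D <= a * s * D by rewrite leq_mul2r h3 orbT.
  move=> h; apply: leq_trans h; rewrite /i mulSn [D + _]addnC ltn_add2l.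
  exact: leq_trans hxe heD.
- by rewrite /Sp hi h1 hie !eqxx.
- by rewrite /Sq hi eqxx -modd' hie modd' h2 eqxx.
Qed.

End Arith.



Lemma pair_view p q : pattern_pos p -> pattern_pos q -> chainable p q ->
  exists a b c' d' s t r,
  [/\ [/\ 0 < a, 0 < b, 0 < c' & 0 < d'], [/\ 0 < s, 0 < t & 0 < r],
      [/\ Sentry p =2 Sp b d' s t r, Sentry q =2 Sq c' d' t r &
          Sentry (pstar p q) =2 Spq b c' d' s t],
      [/\ prows p = a * (b * (t * d')), pcols p = a * s * (r * (t * d')),
          prows q = a * s * (r * (t * d')) & pcols q = a * s * (c' * d')] &
      [/\ rpair p q = r, prows (pstar p q) = prows p & pcols (pstar p q) = pcols q]].
Proof.
move=> pp pq pc.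
have [s [t [r [E1 E2 E3 E4 E5]]]] := chain_param pp pq pc.
move: pp pq pc E5; case: p E1 E2 E3 E4 => a b c d; case: q => a' b' c' d' /=.
move=> E1 E2 E3 E4; subst.
rewrite /pattern_pos /= => /and4P [a0 b0 c0 d0] /and4P [_ _ c0' d0'] _ E5.
have s0 : 0 < s by move: c0; rewrite muln_gt0 => /andP [].
have r0 : 0 < r by move: c0; rewrite muln_gt0 => /andP [].
have t0 : 0 < t by move: d0; rewrite muln_gt0 => /andP [].
exists a, b, c', d', s, t, r; split => //.
- split => x y; rewrite /Sentry /Sp /Sq /Spq /pstar /=.
  + by rewrite (_ : s * r * (t * d') = r * (t * d') * s) ?divnMA //; lia.
  + by rewrite mulnA.
  + have -> : b * (t * d') %/ d' = b * t by rewrite mulnA mulnK.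
    have -> : a * s * c' %/ a = s * c' by rewrite -mulnA mulKn.
    have -> : b * t * d' = b * (t * d') by rewrite mulnA.
    have -> : s * c' * d' = c' * d' * s by lia.
    by rewrite (divnMA y).
- split; rewrite /prows /pcols /=; lia.
- split => //; rewrite /prows /pcols /pstar /=.
  + have -> : b * (t * d') %/ d' = b * t by rewrite mulnA mulnK.
    lia.
  + have -> : a * s * c' %/ a = s * c' by rewrite -mulnA mulKn.
    lia.
Qed.

Section PairFacts.
Variables (p q : pattern).
Hypotheses (pp : pattern_pos p) (pq : pattern_pos q) (pc : chainable p q).

Lemma star_fwd x i y : Sentry p x i -> Sentry q i y -> Sentry (pstar p q) x y.
Proof.
have [a [b [c' [d' [s [t [r [[a0 b0 c0 d0] [s0 t0 r0] [E1 E2 E3] _ _]]]]]]]] :=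
  pair_view pp pq pc.
rewrite E1 E2 E3; exact: L1f.
Qed.

Lemma star_back x y : x < prows p -> y < pcols q -> Sentry (pstar p q) x y ->
  exists i, [/\ i < pcols p, Sentry p x i & Sentry q i y].
Proof.
have [a [b [c' [d' [s [t [r [[a0 b0 c0 d0] [s0 t0 r0] [E1 E2 E3] [F1 F2 F3 F4] _]]]]]]]] :=
  pair_view pp pq pc.
rewrite E3 F1 F4 F2 => hx hy hs.
have [h1 h2 h3] := L1b a0 b0 c0 d0 s0 t0 r0 hx hy hs.
by eexists; split; [exact: h1 | rewrite E1 | rewrite E2].
Qed.

Lemma pair_dims : [/\ pcols p = prows q, prows (pstar p q) = prows p,
   pcols (pstar p q) = pcols q & 0 < rpair p q].
Proof.
have [a [b [c' [d' [s [t [r [[a0 b0 c0 d0] [s0 t0 r0] _ [F1 F2 F3 F4] [G1 G2 G3]]]]]]]]] :=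
  pair_view pp pq pc.
by rewrite F2 F3 G1.
Qed.

Lemma class_lemma : exists g : nat -> nat, (forall i, g i < rpair p q) /\
  forall k (i0 : 'I_k), k = pcols p ->
  exists h : 'I_(rpair p q) -> 'I_k,
  [/\ forall w x, Sentry p x (h w) = Sentry p x i0,
      forall w y, Sentry q (h w) y = Sentry q i0 y,
      forall w, g (h w) = w &
      forall x y (i : 'I_k), Sentry p x i0 -> Sentry q i0 y ->
         Sentry p x i -> Sentry q i y -> exists w, i = h w].
Proof.
have [a [b [c' [d' [s [t [r [[a0 b0 c0 d0] [s0 t0 r0] [E1 E2 E3] [F1 F2 F3 F4] [G1 G2 G3]]]]]]]]] :=
  pair_view pp pq pc.
rewrite G1; exists (gn d' t r); split; first by move=> i; exact: (gn_lt a0 b0 c0 d0 s0 t0 r0).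
move=> k i0 hk.
have hi0 : i0 < a * s * (r * (t * d')) by rewrite -F2 -hk.
have hv : forall w : 'I_r, val (insubd i0 (hn d' t r i0 w) : 'I_k) = hn d' t r i0 w.
  move=> w; rewrite insubdK // unfold_in; move: (hn_lt a0 b0 c0 d0 s0 t0 r0 hi0 (ltn_ord w)); by rewrite -F2 -hk.
exists (fun w => insubd i0 (hn d' t r i0 w)); split.
- by move=> w x; rewrite !E1 hv (Sp_hn a0 b0 c0 d0 s0 t0 r0).
- by move=> w y; rewrite !E2 hv (Sq_hn a0 b0 c0 d0 s0 t0 r0).
- by move=> w; rewrite hv (gn_hn a0 b0 c0 d0 s0 t0 r0).
- move=> x y i; rewrite !E1 !E2 => h1 h2 h3 h4.
  exists (Ordinal (gn_lt a0 b0 c0 d0 s0 t0 r0 i)); apply: val_inj; rewrite hv /=.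
  exact: (hn_gn h1 h2 h3 h4).
Qed.

End PairFacts.


Import GRing.Theory.
Local Open Scope ring_scope.

Definition mmask m n (f : 'I_m -> 'I_n -> bool) (A : 'M[CC]_(m, n)) : 'M[CC]_(m, n) :=
  \matrix_(x, y) (if f x y then A x y else 0).

Definition rectm (p q : pattern) m n (i : nat) (A : 'M[CC]_(m, n)) :=
  mmask (fun x y => Sentry p x i && Sentry q i y) A.

Definition maskS (q : pattern) m n (A : 'M[CC]_(m, n)) :=
  mmask (fun i y => Sentry q i y) A.

Definition inMr (p q : pattern) m n (A : 'M[CC]_(m, n)) : Prop :=
  [/\ m = prows p, n = pcols q &
      forall i, (i < pcols p)%N -> (\rank (rectm p q i A) <= rpair p q)%N].

Lemma sum_class k r (h : 'I_r -> 'I_k) (g : nat -> nat) (P : pred 'I_k)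
  (F : 'I_k -> CC) :
  (forall w, g (h w) = w) -> (forall w, P (h w)) ->
  (forall i, P i -> exists w, i = h w) ->
  (forall i, ~~ P i -> F i = 0) -> \sum_i F i = \sum_w F (h w).
Proof.
move=> gh Ph hP F0.
rewrite (bigID P) /= [X in _ + X]big1 ?addr0; last by move=> i /F0.
have hinj : injective h.
  by move=> w1 w2 e; apply: val_inj; rewrite /= -(gh w1) -(gh w2) e.
rewrite (eq_bigl (mem [set h w | w in [set: 'I_r]])).
  rewrite big_imset /=; last by move=> ? ? _ _; apply: hinj.
  by apply: eq_bigl => w; rewrite in_setT.
move=> i /=; apply/idP/imsetP.
  by case/hP => w ->; exists w; rewrite ?in_setT.
by case=> w _ ->.
Qed.

Lemma fac m n r (B : 'M[CC]_(m, n)) : (\rank B <= r)%N ->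
  (col_ebase B *m (pid_mx r : 'M_(m, r))) *m
    (((pid_mx r : 'M_(r, m)) *m invmx (col_ebase B)) *m B) = B.
Proof.
move=> hr.
have EB := mulmx_ebase B.
set L := col_ebase B in EB *.
transitivity (L *m (pid_mx r : 'M_(m, r)) *m ((pid_mx r : 'M_(r, m)) *m invmx L *m
                (L *m (pid_mx (\rank B) : 'M_(m, n)) *m row_ebase B))); first by rewrite EB.
rewrite !mulmxA -(mulmxA _ (invmx L) L) mulVmx ?col_ebase_unit // mulmx1.
rewrite -(mulmxA L) mul_pid_mx minnn -(mulmxA L) mul_pid_mx.
rewrite minnn (minn_idPr hr) (minn_idPr (rank_leq_row B)).
exact: EB.
Qed.

Lemma Smat_E p m n (i : 'I_m) (j : 'I_n) : Smat p m n i j = Sentry p i j.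
Proof. by rewrite mxE. Qed.

Section Two.
Variables (p q : pattern).
Hypotheses (pp : pattern_pos p) (pq : pattern_pos q) (pc : chainable p q).

Lemma two_rank m k n (X : 'M[CC]_(m, k)) (Y : 'M[CC]_(k, n)) :
  inSigma p X -> inSigma q Y -> forall i0, (i0 < k)%N ->
  (\rank (rectm p q i0 (X *m Y)) <= rpair p q)%N.
Proof.
move=> [_ hk sX] [_ _ sY] i0 hi0.
have [g [gr cl]] := class_lemma pp pq pc.
have [h [hp hq gh hcl]] := cl k (Ordinal hi0) hk.
pose X' : 'M[CC]_(m, rpair p q) :=
  \matrix_(x, w) (if Sentry p x i0 then X x (h w) else 0).
pose Y' : 'M[CC]_(rpair p q, n) :=
  \matrix_(w, y) (if Sentry q i0 y then Y (h w) y else 0).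
suff -> : rectm p q i0 (X *m Y) = X' *m Y'.
  exact: leq_trans (mxrankM_maxl _ _) (rank_leq_col _).
apply/matrixP => x y; rewrite !mxE.
case: (boolP (Sentry p x i0)) => hx; case: (boolP (Sentry q i0 y)) => hy /=.
- rewrite (@sum_class _ _ h g (fun i => Sentry p x i && Sentry q i y)) //.
  + by apply: eq_bigr => w _; rewrite !mxE hx hy.
  + by move=> w; rewrite hp hq hx hy.
  + move=> i /andP [h1 h2]; exact: (hcl x y i hx hy h1 h2).
  + move=> i; case/nandP => hn.
      by rewrite sX ?mul0r // Smat_E.
    by rewrite (sY i y) ?mulr0 // Smat_E.
- by rewrite big1 // => w _; rewrite !mxE (negbTE hy) mulr0.
- by rewrite big1 // => w _; rewrite !mxE (negbTE hx) mul0r.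
- by rewrite big1 // => w _; rewrite !mxE (negbTE hx) mul0r.
Qed.

Lemma two_constr m n (A : 'M[CC]_(m, n)) :
  inSigma (pstar p q) A ->
  (forall i, (i < pcols p)%N -> (\rank (rectm p q i A) <= rpair p q)%N) ->
  exists (X : 'M[CC]_(m, pcols p)) (W : 'M[CC]_(pcols p, m)),
  [/\ inSigma p X, forall i x, W i x != 0 -> Sentry p x i &
      A = X *m maskS q (W *m A)].
Proof.
move=> [hm hn sA] hrk.
have [E1 E2 E3 r0] := pair_dims pp pq pc.
have [g [gr cl]] := class_lemma pp pq pc.
set k := pcols p in hrk *; set r := rpair p q in gr cl hrk r0 *.
pose w0 : 'I_r := Ordinal r0.
pose gw (i : nat) : 'I_r := insubd w0 (g i).
have gwE : forall i, val (gw i) = g i by move=> i; rewrite insubdK // unfold_in gr.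
pose Bm (i : nat) := rectm p q i A.
pose FX (B : 'M[CC]_(m, n)) := col_ebase B *m (pid_mx r : 'M_(m, r)).
pose FW (B : 'M[CC]_(m, n)) := (pid_mx r : 'M_(r, m)) *m invmx (col_ebase B).
pose X : 'M[CC]_(m, k) :=
  \matrix_(x, i) (if Sentry p x i then FX (Bm i) x (gw i) else 0).
pose W : 'M[CC]_(k, m) :=
  \matrix_(i, x) (if Sentry p x i then FW (Bm i) (gw i) x else 0).
exists X, W; split.
- split => //; first by rewrite hm E2.
  by move=> x i; rewrite Smat_E mxE => /negbTE ->.
- by move=> i x; rewrite mxE; case: (Sentry p x i) => //; rewrite eqxx.
apply/matrixP => x y; rewrite !mxE.
case: (pickP (fun i0 : 'I_k => Sentry p x i0 && Sentry q i0 y)) => [i0 /andP [hx hy]|none].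
- have [h [hp hq gh hcl]] := cl k i0 erefl.
  have F0 : forall i : 'I_k, ~~ (Sentry p x i && Sentry q i y) ->
      X x i * maskS q (W *m A) i y = 0.
    move=> i; case/nandP => hn0.
      by rewrite mxE (negbTE hn0) mul0r.
    by rewrite /maskS /mmask mxE (negbTE hn0) mulr0.
  have hP : forall i : 'I_k, Sentry p x i && Sentry q i y -> exists w, i = h w.
    move=> i /andP [h1 h2]; exact: (hcl x y i hx hy h1 h2).
  have Ph : forall w, Sentry p x (h w) && Sentry q (h w) y.
    by move=> w; rewrite hp hq hx hy.
  rewrite (@sum_class _ _ h g (fun i => Sentry p x i && Sentry q i y) _ gh Ph hP F0).
  have hB : forall w, Bm (h w) = Bm i0.
    by move=> w; apply/matrixP => x' y'; rewrite /Bm /rectm /mmask !mxE hp hq.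
  have hg : forall w, gw (h w) = w by move=> w; apply: val_inj; rewrite gwE gh.
  have -> : A x y = Bm i0 x y by rewrite /Bm /rectm /mmask mxE hx hy.
  have Hf := fac (hrk i0 (ltn_ord i0)); rewrite -/(Bm i0) in Hf.
  rewrite -{1}Hf -/(FX (Bm i0)) -/(FW (Bm i0)).
  rewrite mxE; apply: eq_bigr => w _.
  rewrite /maskS /mmask !mxE hp hx hq hy hB hg; congr (_ * _).
  apply: eq_bigr => x' _; rewrite [W _ _]mxE hp hB hg.
  rewrite {1}/Bm /rectm /mmask [in X in _ * X = _]mxE hy andbT.
  by case: (Sentry p x' i0); rewrite ?mul0r ?mulr0.
- rewrite big1; last first.
    move=> i _; rewrite !mxE; move: (none i) => /negbT; case/nandP => hn0.
      by rewrite (negbTE hn0) mul0r.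
    by rewrite /maskS /mmask ?mxE (negbTE hn0) mulr0.
  apply: sA; rewrite Smat_E; apply/negP => hs.
  have hx : (x < prows p)%N by rewrite -E2 -hm.
  have hy : (y < pcols q)%N by rewrite -E3 -hn.
  have [i [hi h1 h2]] := star_back pp pq pc hx hy hs.
  by move: (none (Ordinal hi)); rewrite /= h1 h2.
Qed.

Lemma two_factor m n (A : 'M[CC]_(m, n)) :
  inB [:: p; q] A <-> inSigma (pstar p q) A /\ inMr p q A.
Proof.
have [E1 E2 E3 r0] := pair_dims pp pq pc.
split.
- case=> k [X [Y [sX sY ->]]].
  have [hm hk sx] := sX; have [hk' hn sy] := sY.
  split; last first.
    split => // i hi; apply: two_rank => //; by rewrite hk.
  split; [by rewrite E2 | by rewrite E3 | ].
  move=> x y; rewrite Smat_E => hs; rewrite mxE big1 // => i _.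
  case: (boolP (Sentry p x i)) => h1; last by rewrite sx ?mul0r // Smat_E.
  case: (boolP (Sentry q i y)) => h2; last by rewrite sy ?mulr0 // Smat_E.
  by move: hs; rewrite (star_fwd pp pq pc h1 h2).
- case=> sA [hm hn hr].
  have [X [W [sX hW ->]]] := two_constr sA hr.
  exists (pcols p), X, (maskS q (W *m A)); split => //.
  split => // i y; rewrite Smat_E /maskS /mmask mxE => /negbTE -> //.
Qed.

End Two.

Lemma rank_transfer p P' Q' (pp : pattern_pos p) (pP : pattern_pos P')
  (pQ : pattern_pos Q') (c1 : chainable p P') (c2 : chainable P' Q')
  k m n (W : 'M[CC]_(k, m)) (A : 'M[CC]_(m, n)) :
  (forall i x, W i x != 0 -> Sentry p x i) -> forall k0,
  (\rank (rectm P' Q' k0 (maskS (pstar P' Q') (W *m A))) <=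
   \rank (rectm (pstar p P') Q' k0 A))%N.
Proof.
move=> hW k0.
pose W2 : 'M[CC]_(k, m) := \matrix_(i, x) (if Sentry P' i k0 then W i x else 0).
suff -> : rectm P' Q' k0 (maskS (pstar P' Q') (W *m A)) =
          W2 *m rectm (pstar p P') Q' k0 A by exact: mxrankM_maxr.
apply/matrixP => i y; rewrite /rectm /maskS /mmask !mxE.
case: (boolP (Sentry P' i k0)) => hi; case: (boolP (Sentry Q' k0 y)) => hy /=.
- rewrite (star_fwd pP pQ c2 hi hy); apply: eq_bigr => x _.
  rewrite !mxE hi hy andbT.
  case: (eqVneq (W i x) 0) => [->|nz]; first by rewrite !mul0r.
  by rewrite (star_fwd pp pP c1 (hW _ _ nz) hi).
- by rewrite big1 // => x _; rewrite !mxE (negbTE hy) andbF mulr0.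
- by rewrite big1 // => x _; rewrite !mxE (negbTE hi) mul0r.
- by rewrite big1 // => x _; rewrite !mxE (negbTE hi) mul0r.
Qed.

Lemma sum_deltal m (a : 'I_m) (F : 'I_m -> CC) :
  \sum_x (x == a)%:R * F x = F a.
Proof.
rewrite (bigD1 a) //= eqxx mul1r big1 ?addr0 // => x ne.
by rewrite (negbTE ne) mul0r.
Qed.

Lemma sum_deltar m (a : 'I_m) (F : 'I_m -> CC) :
  \sum_x F x * (x == a)%:R = F a.
Proof.
rewrite (bigD1 a) //= eqxx mulr1 big1 ?addr0 // => x ne.
by rewrite (negbTE ne) mulr0.
Qed.

Lemma sum_enum_delta m (Rs : {set 'I_m}) (x : 'I_m) (F : 'I_m -> CC) :
  \sum_(e < #|Rs|) (x == enum_val e)%:R * F (enum_val e) =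
  if x \in Rs then F x else 0.
Proof.
rewrite -(big_enum_val (fun x' => (x == x')%:R * F x')).
case: (boolP (x \in Rs)) => hx.
  rewrite (bigD1 x) //= eqxx mul1r big1 ?addr0 // => x' /andP [_ ne].
  by rewrite eq_sym (negbTE ne) mul0r.
rewrite big1 // => x' hx'.
have -> : (x == x') = false by apply/negP => /eqP e; move: hx; rewrite e hx'.
by rewrite mul0r.
Qed.

Lemma rank_submx_mask m n (A : 'M[CC]_(m, n)) (Rs : {set 'I_m}) (Cs : {set 'I_n}) :
  \rank (submx_set A Rs Cs) = \rank (mmask (fun x y => (x \in Rs) && (y \in Cs)) A).
Proof.
set M := mmask _ A.
apply/eqP; rewrite eqn_leq; apply/andP; split.
- pose Pt : 'M[CC]_(#|Rs|, m) := \matrix_(e, x) (x == enum_val e)%:R.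
  pose Qt : 'M[CC]_(n, #|Cs|) := \matrix_(y, e) (y == enum_val e)%:R.
  suff -> : submx_set A Rs Cs = Pt *m M *m Qt.
    exact: leq_trans (mxrankM_maxl _ _) (mxrankM_maxr _ _).
  apply/matrixP => e e'; rewrite /Pt /Qt !mxE.
  under [RHS]eq_bigr => i _ do rewrite [_ i e']mxE.
  rewrite sum_deltar mxE.
  under eq_bigr => i _ do rewrite [_ e i]mxE.
  by rewrite sum_deltal /M mxE !enum_valP.
- pose Pm : 'M[CC]_(m, #|Rs|) := \matrix_(x, e) (x == enum_val e)%:R.
  pose Qm : 'M[CC]_(#|Cs|, n) := \matrix_(e, y) (y == enum_val e)%:R.
  suff -> : M = Pm *m submx_set A Rs Cs *m Qm.
    exact: leq_trans (mxrankM_maxl _ _) (mxrankM_maxr _ _).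
  apply/matrixP => x y; rewrite /M /Pm /Qm !mxE.
  have -> : \sum_j (Pm *m submx_set A Rs Cs) x j * Qm j y =
            \sum_(j < #|Cs|) (y == enum_val j)%:R *
               (if x \in Rs then A x (enum_val j) else 0).
    apply: eq_bigr => j _; rewrite mulrC !mxE; congr (_ * _).
    under eq_bigr do rewrite !mxE.
    exact: (sum_enum_delta Rs x (fun x' => A x' (enum_val j))).
  rewrite (sum_enum_delta Cs y (fun y' => if x \in Rs then A x y' else 0)).
  by case: (x \in Rs); case: (y \in Cs).
Qed.

Lemma upart_cover m r n (L : 'M[bool]_(m, r)) (R : 'M[bool]_(r, n)) (i : 'I_r) :
  exists2 P, P \in Upartition L R & i \in P.
Proof.
have hpart : partition (Upartition L R) [set: 'I_r].
  apply: equivalence_partitionP => x y z _ _ _; split => // /eqP ->; done.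
case/and3P: hpart => /eqP hcov _ _.
have hi : i \in cover (Upartition L R) by rewrite hcov in_setT.
by exists (pblock (Upartition L R) i); [apply: pblock_mem | rewrite mem_pblock].
Qed.

Lemma inM_inMr p q m n (A : 'M[CC]_(m, n)) : pcols p = prows q ->
  inM p q A <-> inMr p q A.
Proof.
move=> hpq.
have key : forall i : 'I_(pcols p),
  \rank (submx_set A (Urows (Smat p m (pcols p)) (Smat q (pcols p) n) i)
                     (Ucols (Smat p m (pcols p)) (Smat q (pcols p) n) i)) =
  \rank (rectm p q i A).
  move=> i; rewrite rank_submx_mask; congr (\rank _).
  by apply/matrixP => x y; rewrite !mxE !inE !Smat_E.
split.
- case=> hm hn _ H; split => // i hi.
  have [P HP Hi] := upart_cover (Smat p m (pcols p)) (Smat q (pcols p) n) (Ordinal hi).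
  by have := H P HP _ Hi; rewrite key.
- case=> hm hn H; split => // P _ i _; rewrite key; exact: H.
Qed.

Local Close Scope ring_scope.


Definition dp := dummy_pattern.

Definition chain (s : seq pattern) : Prop :=
  all pattern_pos s /\
  forall l, l.+1 < size s -> chainable (nth dp s l) (nth dp s l.+1).

Lemma chain_cons2 p q s : chain (p :: q :: s) ->
  [/\ pattern_pos p, chainable p q & chain (q :: s)].
Proof.
case=> /andP [hp hall] H; split => //; first exact: (H 0).
by split => // l hl; apply: (H l.+1).
Qed.

Lemma chain_cons p q s : pattern_pos p -> chainable p q -> chain (q :: s) ->
  chain (p :: q :: s).
Proof.
move=> hp hpq [hall H]; split; first by rewrite /= hp.
by case=> [|l] hl //=; apply: H.
Qed.

Lemma chain_head p s : chain (p :: s) -> pattern_pos p.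
Proof. by case=> /andP []. Qed.

Lemma chain_take l s : chain s -> chain (take l s).
Proof.
case=> hall H; split; first by rewrite -(cat_take_drop l s) all_cat in hall; case/andP: hall.
move=> i; rewrite size_take => hi.
have [h1 h2] : i.+1 < size s /\ i.+1 < l by move: hi; case: (ltnP l (size s)) => h hi; split; lia.
rewrite !nth_take //; last exact: ltn_trans h2.
exact: H.
Qed.

Lemma chain_drop l s : chain s -> chain (drop l s).
Proof.
case=> hall H; split; first by rewrite -(cat_take_drop l s) all_cat in hall; case/andP: hall.
move=> i; rewrite size_drop => hi.
rewrite !nth_drop addnS; apply: H; lia.
Qed.

Lemma pat_eq p q : pattern_pos p -> pattern_pos q -> pa p = pa q -> pd p = pd q ->
  pb p * pd p = pb q * pd q -> pa p * pc p = pa q * pc q -> p = q.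
Proof.
case: p => a b c d; case: q => a' b' c' d' /=.
rewrite /pattern_pos /= => /and4P [a0 b0 c0 d0] _ <- <- h1 h2.
have -> : b = b' by apply/eqP; rewrite -(eqn_pmul2r d0) h1.
by have -> : c = c' by apply/eqP; rewrite -(eqn_pmul2l a0) h2.
Qed.

Lemma star_shape p q : pattern_pos p -> pattern_pos q -> chainable p q ->
  [/\ pattern_pos (pstar p q), pa (pstar p q) = pa p, pd (pstar p q) = pd q,
      pb (pstar p q) * pd (pstar p q) = pb p * pd p &
      pa (pstar p q) * pc (pstar p q) = pa q * pc q].
Proof.
move=> pp pq hpq.
have [s [t [r [E1 E2 E3 E4 E5]]]] := chain_param pp pq hpq.
move: pp pq hpq E5; case: p E1 E2 E3 E4 => a b c d; case: q => a' b' c' d' /=.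
move=> E1 E2 E3 E4; subst.
rewrite /pattern_pos /pstar /= => /and4P [a0 b0 c0 d0] /and4P [_ _ c0' d0'] _ _.
have -> : b * (t * d') %/ d' = b * t by rewrite mulnA mulnK.
have -> : a * s * c' %/ a = s * c' by rewrite -mulnA mulKn.
have s0 : 0 < s by move: c0; rewrite muln_gt0 => /andP [].
have t0 : 0 < t by move: d0; rewrite muln_gt0 => /andP [].
split => //; try lia.
Qed.

Lemma chain_subl z P q : chainable z q -> pa P * pc P = pa z * pc z ->
  pd P = pd z -> pa P %| pa z -> chainable P q.
Proof.
case=> h1 h2 h3 h4 h5 e1 e2 e3; split; rewrite ?e1 ?e2 //.
exact: dvdn_trans e3 h4.
Qed.

Lemma chain_subr p h Q : chainable p h -> pa Q = pa h ->
  pb Q * pd Q = pb h * pd h -> pd Q %| pd h -> chainable p Q.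
Proof.
case=> h1 h2 h3 h4 h5 e1 e2 e3; split; rewrite ?e1 ?e2 //.
exact: dvdn_trans e3 h5.
Qed.

Lemma fold_shape s p : chain (p :: s) ->
  let P := foldl pstar p s in let z := last p s in
  [/\ pattern_pos P, pa P = pa p, pd P = pd z & pb P * pd P = pb p * pd p] /\
  [/\ pa P * pc P = pa z * pc z, pa p %| pa z & pd z %| pd p].
Proof.
elim: s p => [|q s IH] p hc /=.
  by split; split => //; exact: chain_head hc.
have [pp pq hq] := chain_cons2 hc.
have pq' : pattern_pos q by exact: chain_head hq.
have [S1 S2 S3 S4 S5] := star_shape pp pq' pq.
have hc' : chain (pstar p q :: s).
  case: s IH hc hq => [|r s] IH hc hq.
    by split; [rewrite /= S1 | case].
  have [_ qr hr] := chain_cons2 hq.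
  apply: chain_cons => //.
  apply: chain_subl qr _ _ _ => //.
  by rewrite S2; case: pq.
case: s IH hc hq hc' => [|r s] IH hc hq hc'.
  split; split => //=; try by case: pq.
have [[T1 T2 T3 T4] [T5 T6 T7]] := IH _ hc'.
split; split => //.
- by rewrite T4 S4.
- by apply: dvdn_trans T7 _; rewrite S3; case: pq.
Qed.

Lemma pseq_cons p q u : chain (p :: q :: u) ->
  [/\ pstar_seq (p :: q :: u) = pstar p (pstar_seq (q :: u)),
      chainable p (pstar_seq (q :: u)) & pattern_pos (pstar_seq (q :: u))].
Proof.
move=> hc; have [pp pq hq] := chain_cons2 hc.
have [[Q1 Q2 Q3 Q4] [Q5 Q6 Q7]] := fold_shape hq.
have [[R1 R2 R3 R4] [R5 R6 R7]] := fold_shape hc.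
rewrite /= in Q1 Q2 Q3 Q4 Q5 Q6 Q7 R1 R2 R3 R4 R5 R6 R7 *.
have cpQ : chainable p (foldl pstar q u).
  apply: chain_subr pq Q2 Q4 _; rewrite Q3; exact: Q7.
have [S1 S2 S3 S4 S5] := star_shape pp Q1 cpQ.
split => //.
apply: pat_eq => //.
- by rewrite R3 S3 Q3.
- by rewrite R4 S4.
- by rewrite R5 S5 Q5.
Qed.

Lemma chain_mid x u h v : chain (x :: u ++ h :: v) -> chainable (last x u) h.
Proof.
elim: u x => [|y u IH] x /= hc; first by case: (chain_cons2 hc).
have [_ _ hc'] := chain_cons2 hc; exact: IH.
Qed.

Lemma split_facts0 x u h v : chain (x :: u ++ h :: v) ->
  [/\ pattern_pos (pstar_seq (x :: u)), pattern_pos (pstar_seq (h :: v)),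
      chainable (pstar_seq (x :: u)) (pstar_seq (h :: v)) &
      pstar (pstar_seq (x :: u)) (pstar_seq (h :: v)) = pstar_seq (x :: u ++ h :: v)].
Proof.
move=> hc.
have hxu : chain (x :: u).
  by have := chain_take (size (x :: u)) hc; rewrite -cat_cons take_size_cat.
have hhv : chain (h :: v).
  by have := chain_drop (size (x :: u)) hc; rewrite -cat_cons drop_size_cat.
have cm := chain_mid hc.
have [[P1 P2 P3 P4] [P5 P6 P7]] := fold_shape hxu.
have [[Q1 Q2 Q3 Q4] [Q5 Q6 Q7]] := fold_shape hhv.
have [[R1 R2 R3 R4] [R5 R6 R7]] := fold_shape hc.
rewrite /= in P1 P2 P3 P4 P5 P6 P7 Q1 Q2 Q3 Q4 Q5 Q6 Q7 R1 R2 R3 R4 R5 R6 R7 *.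
rewrite last_cat /= in R3 R5.
have cPQ : chainable (foldl pstar x u) (foldl pstar h v).
  apply: (chain_subl (z := last x u)); [ | exact: P5 | exact: P3 | by rewrite P2].
  apply: chain_subr cm Q2 Q4 _; rewrite Q3; exact: Q7.
have [S1 S2 S3 S4 S5] := star_shape P1 Q1 cPQ.
split => //.
apply: pat_eq => //.
- by rewrite S2 P2 R2.
- by rewrite S3 Q3 R3.
- by rewrite S4 P4 R4.
- by rewrite S5 Q5 R5.
Qed.

Lemma split_facts s l : chain s -> 0 < l < size s ->
  [/\ pattern_pos (pstar_seq (take l s)), pattern_pos (pstar_seq (drop l s)),
      chainable (pstar_seq (take l s)) (pstar_seq (drop l s)) &
      pstar (pstar_seq (take l s)) (pstar_seq (drop l s)) = pstar_seq s].
Proof.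
case: s => [|x s0] //; case: l => [|l] // hc /andP [_ hl].
rewrite /= in hl *.
case Ed: (drop l s0) => [|h v].
  by move: (congr1 size Ed); rewrite size_drop /=; lia.
have Es : s0 = take l s0 ++ h :: v by rewrite -Ed cat_take_drop.
rewrite {1}Es in hc; have := split_facts0 hc; by rewrite -Es.
Qed.


Local Open Scope ring_scope.

Lemma inB_sigma s : chain s -> (0 < size s)%N -> forall m n (A : 'M[CC]_(m, n)),
  inB s A -> inSigma (pstar_seq s) A.
Proof.
elim: s => [//|p s IH] hc _ m n A.
case: s IH hc => [|q u] IH hc //=.
case=> k [X [Y [sX hY ->]]].
have [pp pq hq] := chain_cons2 hc.
have sY := IH hq isT _ _ Y hY.
have [E cpQ pQ] := pseq_cons hc.
rewrite /= in E; rewrite E.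
have [] // := (two_factor pp pQ cpQ (X *m Y)).1.
by exists k, X, Y.
Qed.

Lemma inB_split s1 s2 m n (A : 'M[CC]_(m, n)) : (0 < size s1)%N -> (0 < size s2)%N ->
  inB (s1 ++ s2) A ->
  exists k (X : 'M[CC]_(m, k)) (Y : 'M[CC]_(k, n)), [/\ inB s1 X, inB s2 Y & A = X *m Y].
Proof.
elim: s1 m A => [//|p s1 IH] m A _ hs2.
case: s1 IH => [|q s1] IH /=.
  case: s2 hs2 {IH} => [//|r s2] _ /=.
  by case=> k [X [Y [sX hY ->]]]; exists k, X, Y.
case=> k [X [Y [sX hY ->]]].
have [k' [Z [W [hZ hW ->]]]] := IH _ Y isT hs2 hY.
exists k', (X *m Z), W; split => //; last by rewrite mulmxA.
by exists k, X, Z.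
Qed.

Lemma T2 s l m n (A : 'M[CC]_(m, n)) : chain s -> (0 < l < size s)%N ->
  inB s A -> inB (beta_l s l) A.
Proof.
move=> hc /andP [l0 hl].

rewrite -{1}(cat_take_drop l s) => hB.
have ht : (0 < size (take l s))%N by rewrite size_take hl.
have hd : (0 < size (drop l s))%N by rewrite size_drop subn_gt0.
have [k [X [Y [hX hY ->]]]] := inB_split ht hd hB.
exists k, X, Y; split => //.
- exact: inB_sigma (chain_take l hc) ht _ _ _ hX.
- exact: inB_sigma (chain_drop l hc) hd _ _ _ hY.
Qed.

Lemma rpair_star p q z : pattern_pos p -> pattern_pos q -> chainable p q ->
  rpair (pstar p q) z = rpair q z.
Proof. by move=> pp pq c; have [_ _ _ _ S5] := star_shape pp pq c; rewrite /rpair S5. Qed.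

Lemma T3 t : forall p, chain (p :: t) -> (0 < size t)%N ->
  forall m n (A : 'M[CC]_(m, n)),
  (forall l, (0 < l < size (p :: t))%N -> inB (beta_l (p :: t) l) A) ->
  inB (p :: t) A.
Proof.
elim: t => [//|q t IH] p hc _ m n A H.
case: t IH hc H => [|q' t'] IH hc H; first exact: (H 1%N isT).
set t := q' :: t' in IH hc H *.
have [pp pq hq] := chain_cons2 hc.
have [E cpQ pQ] := pseq_cons hc.
set Q := pstar_seq (q :: t) in E cpQ pQ *.
have H1 : inB [:: p; Q] A by exact: (H 1%N isT).
have [sA hM] := (two_factor pp pQ cpQ A).1 H1.
have [hm hn hr] := hM.
have [X [W [sX hW EA]]] := two_constr pp pQ cpQ sA hr.
have [D1 D2 D3 D4] := pair_dims pp pQ cpQ.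
rewrite EA.
exists (pcols p), X, (maskS Q (W *m A)); split => //.
apply: IH => //.
move=> l /andP [l0 hl].
have [P1 P2 cPQ EPQ] := split_facts hq (introT andP (conj l0 hl)).
case: l l0 hl P1 P2 cPQ EPQ => [//|l] _ hl P1 P2 cPQ EPQ.
rewrite /beta_l /= in P1 P2 cPQ EPQ *.
set P' := pstar_seq (q :: take l t) in P1 P2 cPQ EPQ *.
set Q' := pstar_seq (drop l t) in P1 P2 cPQ EPQ *.
have [F1 F2 F3 F4] := pair_dims P1 P2 cPQ.
apply: (proj2 (two_factor P1 P2 cPQ _)); split.
- rewrite EPQ; split; [exact: D1 | exact: hn | ].
  by move=> i y; rewrite Smat_E /maskS /mmask mxE => /negbTE ->.
- split.
  + by rewrite -F2 EPQ D1.
  + by rewrite -F3 EPQ.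
  move=> k0 hk0.
  have hc2 : chain (p :: q :: take l t) by have := chain_take l.+2 hc.
  have [E' cpP' pP'] := pseq_cons hc2.
  rewrite -/P' in E' cpP' pP'.
  have H2 := H l.+2 hl.
  rewrite /beta_l /= -/Q' in H2.
  have [R1 R2 cR ER] := split_facts hc (hl : (0 < l.+2 < size (p :: q :: t))%N).
  rewrite /= -/Q' -/P' in R1 R2 cR ER.
  have E'' : foldl pstar (pstar p q) (take l t) = pstar p P' := E'.
  rewrite E'' in H2 R1 cR.
  have [_ [_ _ hr2]] := (two_factor R1 R2 cR A).1 H2.
  have [G1 G2 G3 G4] := pair_dims pp pP' cpP'.
  have EQ : pstar P' Q' = Q := EPQ. rewrite -EQ.
  have RT := rank_transfer pp pP' P2 cpP' cPQ A hW k0. apply: (leq_trans RT).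
  rewrite -(rpair_star Q' pp pP' cpP').
  apply: hr2; by rewrite G3.
Qed.

Local Close Scope ring_scope.
Unset Implicit Arguments.
Set Strict Implicit.

Lemma arch_chain beta : chainable_arch beta -> chain beta.
Proof. by case=> [[_ hall _] H]; split. Qed.

Theorem corollary7p7 (beta : seq pattern) :
  chainable_arch beta -> (2 <= size beta)%N ->
  forall A : 'M[CC]_(prows (head dummy_pattern beta),
                      pcols (last dummy_pattern beta)),
    (inB beta A <->
       (forall l, (1 <= l < size beta)%N -> inB (beta_l beta l) A)) /\
    (inB beta A <->
       (inSigma (pstar_seq beta) A /\
        forall l, (1 <= l < size beta)%N ->
          inM (pstar_seq (take l beta)) (pstar_seq (drop l beta)) A)).
Proof.
move=> ha hs A.
have hc := arch_chain beta ha.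
have back : (forall l, (1 <= l < size beta)%N -> inB (beta_l beta l) A) -> inB beta A.
  case: beta ha hs A hc => [//|p t] ha hs A hc H.
  by apply: T3 => //; rewrite /= ltnS in hs.
split.
  split; last exact: back.
  by move=> hB l hl; apply: T2.
split.
- move=> hB; split; first by apply: inB_sigma => //; case: (beta) hs.
  move=> l hl.
  have [P1 P2 cPQ EPQ] := split_facts hc hl.
  have [D1 _ _ _] := pair_dims P1 P2 cPQ.
  have hBl := T2 hc hl hB.
  have [_ hM] := (two_factor P1 P2 cPQ A).1 hBl.
  by apply/inM_inMr.
- case=> hS hM; apply: back => l hl.
  have [P1 P2 cPQ EPQ] := split_facts hc hl.
  have [D1 _ _ _] := pair_dims P1 P2 cPQ.
  apply/(two_factor P1 P2 cPQ A); split; first by rewrite EPQ.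
  by apply/inM_inMr => //; apply: hM.
Qed.
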